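(* Fix an integer $n\ge1$. Then $x\mapsto\psi(x;n)$ is non-decreasing on $\mathbb Z_{\ge0}$; for all $x\in\mathbb Z_{\ge0}$ one has $\mathfrak p^n_1(x,x+1)\ge\frac12\ge\mathfrak p^n_1(x,x-1)$; and $x\mapsto\mathfrak p^n_1(x,x+1)$ is non-increasing while $x\mapsto\mathfrak p^n_1(x,x-1)$ is non-decreasing.
   Context: Let $p_n(w)$ be the probability that simple symmetric random walk on $\mathbb Z$ started at $0$ is at $w$ at time $n$. For $x,y\in\mathbb Z_{\ge0}$ set $p^{(1/2)}_n(x,y)=p_n(x-y)-p_n(x+y+2)$ (and $p^{(1/2)}_n(x,-1)=0$), $\psi(x;n)=\sum_{y\ge0}p^{(1/2)}_n(x,y)$, and for $0\le n\le N$, $\mathfrak p^N_n(x,y)=p^{(1/2)}_n(x,y)\,\psi(y;N-n)/\psi(x;N)$. Thus $\mathfrak p^n_1(x,x\pm1)$ are the one-step transition probabilities at time $0$ of simple random walk of length $n$ conditioned to stay non-negative. *)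

(* Defs.v *)
From HB Require Import structures.
From mathcomp Require Import all_boot all_order all_algebra.
Set Implicit Arguments. Unset Strict Implicit. Unset Printing Implicit Defensive.
Import Order.TTheory GRing.Theory Num.Theory.
Local Open Scope ring_scope.

(* p_n(w): probability that SSRW on Z started at 0 is at w at time n,
   given by the Chapman-Kolmogorov recursion of the walk. *)
Fixpoint srw (n : nat) (w : int) : rat :=
  match n with
  | 0%N => (w == 0)%:R
  | m.+1 => (srw m (w - 1) + srw m (w + 1)) / 2%:R
  end.

(* p^{(1/2)}_n(x,y) = p_n(x-y) - p_n(x+y+2); note at y = -1 this is 0. *)
Definition phalf (n : nat) (x y : int) : rat := srw n (x - y) - srw n (x + y + 2).

(* psi(x;n) = sum_{y>=0} p^{(1/2)}_n(x,y); the summand vanishes for y > |x|+n,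
   so the series is the finite sum below. *)
Definition psi (x : int) (n : nat) : rat :=
  \sum_(0 <= y < (`|x| + n).+1) phalf n x (y%:Z).

Definition frakp (N n : nat) (x y : int) : rat :=
  phalf n x y * psi y (N - n) / psi x N.

(* Main.v *)
Require Import Defs.
From HB Require Import structures.
From mathcomp Require Import all_boot all_order all_algebra zify ring lra.
Import Order.TTheory GRing.Theory Num.Theory.
Local Open Scope ring_scope.

Lemma srwS m w : srw m.+1 w = (srw m (w - 1) + srw m (w + 1)) / 2%:R.
Proof. by []. Qed.

Lemma srw_sym m w : srw m (- w) = srw m w.
Proof.
elim: m w => [|m IH] w /=; first by rewrite oppr_eq0.
rewrite (_ : - w - 1 = - (w + 1)); last by ring.
rewrite (_ : - w + 1 = - (w - 1)); last by ring.
by rewrite !IH addrC.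
Qed.

Lemma srw_out m w : (m < `|w|)%N -> srw m w = 0.
Proof.
elim: m w => [|m IH] w /= h.
  by case: eqP => // e; move: h; rewrite e.
by rewrite !IH ?addr0 ?mul0r //; lia.
Qed.

Lemma phalf_out m (x : int) (y : nat) : (`|x| + m < y)%N -> phalf m x y%:Z = 0.
Proof. by move=> h; rewrite /phalf !srw_out ?subr0 //; lia. Qed.

Lemma psi_ext x m K : (`|x| + m < K)%N ->
  \sum_(0 <= y < K) phalf m x y%:Z = psi x m.
Proof.
move=> h; rewrite /psi (big_cat_nat _ (n := (`|x| + m).+1)) //=.
rewrite [X in _ + X]big1_seq ?addr0 // => i /andP [_].
by rewrite mem_index_iota => /andP [hi _]; apply: phalf_out.
Qed.

Lemma phalfS m x y : phalf m.+1 x y = (phalf m (x - 1) y + phalf m (x + 1) y) / 2%:R.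
Proof.
rewrite /phalf !srwS.
rewrite (_ : x - 1 - y = x - y - 1); last by ring.
rewrite (_ : x + 1 - y = x - y + 1); last by ring.
rewrite (_ : x - 1 + y + 2 = x + y + 2 - 1); last by ring.
rewrite (_ : x + 1 + y + 2 = x + y + 2 + 1); last by ring.
by field.
Qed.

Lemma psiS x m : psi x m.+1 = (psi (x - 1) m + psi (x + 1) m) / 2%:R.
Proof.
rewrite {1}/psi.
under eq_bigr do rewrite phalfS.
rewrite -big_distrl /= big_split /= !psi_ext //; lia.
Qed.

Lemma psi_m1 m : psi (-1) m = 0.
Proof.
rewrite /psi big1 // => y _; rewrite /phalf.
rewrite (_ : -1 - y%:Z = - (y%:Z + 1)); last by ring.
rewrite (_ : -1 + y%:Z + 2 = y%:Z + 1); last by ring.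
by rewrite srw_sym subrr.
Qed.

Lemma psi_0 (x : nat) : psi x%:Z 0 = 1.
Proof.
rewrite /psi addn0 big_nat_recr //= big1_seq.
  rewrite add0r /phalf /= subrr eqxx.
  have -> : (x%:Z + x%:Z + 2 == 0) = false by apply/eqP; lia.
  by rewrite subr0.
move=> y /andP [_]; rewrite mem_index_iota => /andP [_ hy].
rewrite /phalf /=.
have -> : (x%:Z - y%:Z == 0) = false by apply/eqP; lia.
have -> : (x%:Z + y%:Z + 2 == 0) = false by apply/eqP; lia.
by rewrite subrr.
Qed.

Definition f m (k : nat) := psi (k%:Z - 1) m.

Lemma f0 m : f m 0 = 0.
Proof. exact: psi_m1. Qed.

Lemma fz k : f 0 k.+1 = 1.
Proof. by rewrite /f (_ : k.+1%:Z - 1 = k%:Z) ?psi_0 //; lia. Qed.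

Lemma fS m k : f m.+1 k.+1 = (f m k + f m k.+2) / 2%:R.
Proof.
rewrite /f psiS.
rewrite (_ : k.+1%:Z - 1 - 1 = k%:Z - 1); last by lia.
by rewrite (_ : k.+1%:Z - 1 + 1 = k.+2%:Z - 1); last by lia.
Qed.

Lemma chain (g : nat -> rat) : (forall k, g k <= g k.+1) ->
  forall i j, (i <= j)%N -> g i <= g j.
Proof.
move=> h i j; elim: j => [|j IH]; first by rewrite leqn0 => /eqP ->.
rewrite leq_eqVlt => /orP [/eqP -> //|]; rewrite ltnS => /IH hi.
exact: le_trans hi (h j).
Qed.

Lemma f_mono m k : f m k <= f m k.+1.
Proof.
elim: m k => [|m IH] [|k].
- by rewrite f0 fz.
- by rewrite !fz.
- rewrite f0 fS f0 add0r divr_ge0 //.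
  by rewrite -(f0 m); apply: chain.
- by rewrite !fS ler_pM2r ?invr_gt0 // lerD.
Qed.

Lemma f_ge0 m k : 0 <= f m k.
Proof. by rewrite -(f0 m); apply: chain => //; apply: f_mono. Qed.

Lemma f_pos m k : 0 < f m k.+1.
Proof.
elim: m k => [|m IH] k; first by rewrite fz.
rewrite fS divr_gt0 //.
by apply: lt_le_trans (IH k.+1) _; rewrite lerDr f_ge0.
Qed.

Lemma f_conc m k : f m k.+2 - f m k.+1 <= f m k.+1 - f m k.
Proof.
elim: m k => [|m IH] [|k].
- by rewrite f0 !fz; lra.
- by rewrite !fz; lra.
- rewrite f0 !fS f0.
  have := IH 1%N. lra.
- rewrite !fS.
  have := IH k; have := IH k.+2. lra.
Qed.

Lemma f_lc m k : f m k * f m k.+2 <= f m k.+1 ^+ 2.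
Proof.
have h1 := f_conc m k; have h2 := f_ge0 m k; have h3 := f_ge0 m k.+2.
set a := f m k in h1 h2 *; set b := f m k.+1 in h1 *; set c := f m k.+2 in h1 h3 *.
have hs : 0 <= (b - (a + c) / 2%:R) * (b + (a + c) / 2%:R).
  by apply: mulr_ge0; lra.
have hq : 0 <= (a - c) ^+ 2 by apply: sqr_ge0.
rewrite expr2 in hq *. nra.
Qed.

Lemma f_key m k : f m k * f m k.+3 <= f m k.+1 * f m k.+2.
Proof.
have h1 := f_lc m k; have h2 := f_lc m k.+1.
have p1 := f_pos m k; have p2 := f_pos m k.+1.
have h3 := f_ge0 m k; have h4 := f_ge0 m k.+3.
have hp : 0 < f m k.+1 * f m k.+2 by rewrite mulr_gt0.
rewrite -(ler_pM2r hp).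
rewrite (_ : f m k * f m k.+3 * (f m k.+1 * f m k.+2) = (f m k * f m k.+2) * (f m k.+1 * f m k.+3)); last by ring.
apply: le_trans (ler_pM _ _ h1 h2) _.
- by rewrite mulr_ge0 // f_ge0.
- by rewrite mulr_ge0 // f_ge0.
by rewrite !expr2 le_eqVlt; apply/orP; left; apply/eqP; ring.
Qed.

Lemma frac_le (a b c d : rat) : 0 < b -> 0 < d -> a * d <= c * b -> a / b <= c / d.
Proof. by move=> hb hd h; rewrite ler_pdivrMr // mulrAC ler_pdivlMr. Qed.

Lemma chainD (g : nat -> rat) : (forall k, g k.+1 <= g k) ->
  forall i j, (i <= j)%N -> g j <= g i.
Proof.
move=> h i j hij; rewrite -lerN2; apply: (chain (fun k => - g k)) => // k.
by rewrite lerN2.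
Qed.

Lemma psi_f m (x : nat) : psi x%:Z m = f m x.+1.
Proof. by rewrite /f (_ : x.+1%:Z - 1 = x%:Z) //; lia. Qed.

Lemma fr_up m (x : nat) : frakp m.+1 1 x%:Z (x%:Z + 1) = f m x.+2 / (f m x + f m x.+2).
Proof.
rewrite /frakp subn1 /= psi_f fS.
rewrite (_ : x%:Z + 1 = x.+2%:Z - 1); last by lia.
rewrite -/(f m x.+2).
rewrite /phalf /=.
have -> : (x%:Z - (x.+2%:Z - 1) - 1 == 0) = false by apply/eqP; lia.
have -> : (x%:Z - (x.+2%:Z - 1) + 1 == 0) = true by apply/eqP; lia.
have -> : (x%:Z + (x.+2%:Z - 1) + 2 - 1 == 0) = false by apply/eqP; lia.
have -> : (x%:Z + (x.+2%:Z - 1) + 2 + 1 == 0) = false by apply/eqP; lia.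
have hp : f m x + f m x.+2 != 0.
  by apply: lt0r_neq0; apply: lt_le_trans (f_pos m x.+1) _; rewrite lerDr f_ge0.
rewrite /= ?add0r ?addr0. by field.
Qed.

Lemma fr_dn m (x : nat) : frakp m.+1 1 x%:Z (x%:Z - 1) = f m x / (f m x + f m x.+2).
Proof.
rewrite /frakp subn1 /= psi_f fS -/(f m x).
have hp : f m x + f m x.+2 != 0.
  by apply: lt0r_neq0; apply: lt_le_trans (f_pos m x.+1) _; rewrite lerDr f_ge0.
case: x hp => [|k] hp.
  by rewrite f0 !mul0r.
rewrite /phalf /=.
rewrite (_ : k.+1%:Z - (k.+1%:Z - 1) = 1); last by lia.
rewrite (_ : k.+1%:Z + (k.+1%:Z - 1) + 2 = (k.*2 + 3)%N%:Z); last by lia.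
rewrite /=.
have -> : ((k.*2 + 3)%N%:Z - 1 == 0) = false by apply/eqP; lia.
rewrite /= ?add0r ?addr0.
by field.
Qed.

Lemma sum_pos m x : 0 < f m x + f m x.+2.
Proof. by apply: lt_le_trans (f_pos m x.+1) _; rewrite lerDr f_ge0. Qed.

Lemma f_le2 m x : f m x <= f m x.+2.
Proof. apply: (chain _ (f_mono m)); exact: leqW (leqnSn x). Qed.

Theorem lemmaA4 (n : nat) (hn : (1 <= n)%N) :
  (forall x y : nat, (x <= y)%N -> psi x%:Z n <= psi y%:Z n) /\
  (forall x : nat,
     2%:R^-1 <= frakp n 1 x%:Z (x%:Z + 1) /\
     frakp n 1 x%:Z (x%:Z - 1) <= 2%:R^-1) /\
  (forall x y : nat, (x <= y)%N ->
     frakp n 1 y%:Z (y%:Z + 1) <= frakp n 1 x%:Z (x%:Z + 1)) /\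
  (forall x y : nat, (x <= y)%N ->
     frakp n 1 x%:Z (x%:Z - 1) <= frakp n 1 y%:Z (y%:Z - 1)).
Proof.
case: n hn => [//|m] _.
split.
  move=> x y hxy; rewrite !psi_f; by apply: (chain _ (f_mono m.+1)).
split.
  move=> x; rewrite fr_up fr_dn; have hs := sum_pos m x; have hl := f_le2 m x.
  split.
    rewrite ler_pdivlMr //; lra.
  rewrite ler_pdivrMr //; lra.
split.
  apply: (chainD (fun x => frakp m.+1 1 x%:Z (x%:Z + 1))) => k.
  rewrite !fr_up; apply: frac_le; try exact: sum_pos.
  have := f_key m k; nra.
apply: (chain (fun x => frakp m.+1 1 x%:Z (x%:Z - 1))) => k.
rewrite !fr_dn; apply: frac_le; try exact: sum_pos.
have := f_key m k; nra.
Qed.
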